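(* Let $K\ge1$, let $\pi$ be a probability distribution on $\mathbb{X}$ and $\tau(\mathrm{d}h\mid x)$ hold-time distributions on $(0,\infty)$ with survival function $\bar F_\tau(h\mid x)$, such that $H>\epsilon$ almost surely under each $\tau(\cdot\mid x)$ for a fixed $\epsilon>0$ and $\sup_x\mathbb{E}_\tau[H\mid x]<\infty$. Let $(X^{1:K+1},L)$ be distributed according to \[ A(\mathrm{d}x^{1:K+1},\mathrm{d}l)=\frac{\bar F_{\tau}(l\mid x^{K+1})}{\mathbb{E}_{\tau}[H]}\,\mathrm{d}l\prod_{k=1}^{K+1}\pi(\mathrm{d}x^{k}),\qquad l\ge0, \] with $\mathbb{E}_{\tau}[H]=\int\mathbb{E}_{\tau}[H\mid x]\pi(\mathrm{d}x)$. Then the conditional distribution of $X^{1:K+1}$ given $L<\epsilon$ is $\Pi(\mathrm{d}x^{1:K+1})=\prod_{k=1}^{K+1}\pi(\mathrm{d}x^k)$.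
   Context: $A$ is the stationary distribution of the real-time Markov jump process of $K+1$ Markov chains (each with invariant distribution $\pi$) simulated serially on one processor, where the chain being simulated has state $x^{K+1}$, a transition from state $x$ takes real time distributed as $\tau(\cdot\mid x)$, states are rotated after each transition, and $L$ is the time elapsed since the last transition. *)

(* Defs.v *)
From HB Require Import structures.
From mathcomp Require Import all_boot all_order all_algebra.
From mathcomp Require Import all_classical all_reals all_analysis.
Set Implicit Arguments. Unset Strict Implicit. Unset Printing Implicit Defensive.
Import Order.TTheory GRing.Theory Num.Theory.
Local Open Scope classical_set_scope.
Local Open Scope ring_scope.
Local Open Scope ereal_scope.

(* Integral of f : n.-tuple X -> \bar R against the n-fold product pi^{(x)n},
   computed as the iterated integral  \int pi(dx_1) ... \int pi(dx_n) f(x_1..x_n). *)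
Fixpoint tuple_int {d} {X : measurableType d} {R : realType}
  (pi : probability X R) (n : nat) : (n.-tuple X -> \bar R) -> \bar R :=
  match n with
  | 0 => fun f => f [tuple]
  | m.+1 => fun f => \int[pi]_x tuple_int pi (fun t : m.-tuple X => f (cons_tuple x t))
  end.

Definition prod_prob {d} {X : measurableType d} {R : realType}
  (pi : probability X R) (n : nat) (B : set (n.-tuple X)) : \bar R :=
  tuple_int pi (fun t => (\1_B t)%:E).

Definition survival {d} {X : measurableType d} {R : realType}
  (tau : R.-pker X ~> R) (h : R) (x : X) : \bar R := tau x `]h, +oo[%classic.

Definition mean_hold {d} {X : measurableType d} {R : realType}
  (tau : R.-pker X ~> R) (x : X) : \bar R := \int[tau x]_h h%:E.

Definition mean_hold_pi {d} {X : measurableType d} {R : realType}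
  (pi : probability X R) (tau : R.-pker X ~> R) : \bar R :=
  \int[pi]_x mean_hold tau x.

Definition measA {d} {X : measurableType d} {R : realType}
  (pi : probability X R) (tau : R.-pker X ~> R) (K : nat)
  (C : set (K.+1.-tuple X * R)) : \bar R :=
  tuple_int pi (fun t : K.+1.-tuple X =>
    \int[lebesgue_measure]_(l in `[0%R, +oo[%classic)
       ((\1_C (t, l))%:E * survival tau l (tnth t ord_max)
          * (mean_hold_pi pi tau)^-1)).

(* Main.v *)
Require Import Defs.
From HB Require Import structures.
From mathcomp Require Import all_boot all_order all_algebra.
From mathcomp Require Import all_classical all_reals all_analysis.
Import Order.TTheory GRing.Theory Num.Theory.
Local Open Scope classical_set_scope.
Local Open Scope ring_scope.
Local Open Scope ereal_scope.
Import HBNNSimple.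

Lemma int_le_nm d (T : measurableType d) (R : realType)
  (mu : {measure set T -> \bar R}) (f g : T -> \bar R) :
  (forall x, 0 <= f x) -> (forall x, f x <= g x) ->
  \int[mu]_x f x <= \int[mu]_x g x.
Proof.
move=> f0 fg.
have g0 x : 0 <= g x by apply: le_trans (f0 x) (fg x).
rewrite !ge0_integralTE//.
apply: ge_ereal_sup => _ [h hf <-]; apply: ereal_sup_ubound; exists h => //.
by move=> x; apply: le_trans (hf x) (fg x).
Qed.

Lemma int_scale_le d (T : measurableType d) (R : realType)
  (mu : {measure set T -> \bar R}) (f : T -> \bar R) (c : R) :
  (0 < c)%R -> (forall x, 0 <= f x) ->
  \int[mu]_x (c%:E * f x) <= c%:E * \int[mu]_x f x.
Proof.
move=> c0 f0.
have cf0 x : 0 <= c%:E * f x by rewrite mule_ge0// lee_fin ltW.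
rewrite ge0_integralTE//.
apply: ge_ereal_sup => _ [h hf <-].
have ci0 : (0 <= c^-1)%R by rewrite invr_ge0 ltW.
pose h' := scale_nnsfun h ci0.
have -> : sintegral mu h = c%:E * sintegral mu h'.
  rewrite -sintegralrM; apply: eq_sintegral => x /=.
  by rewrite mulrA divff ?mul1r// gt_eqF.
rewrite lee_pmul2l// ?lte_fin//.
rewrite ge0_integralTE//; apply: ereal_sup_ubound; exists h' => // x /=.
rewrite EFinM.
have := hf x => /(lee_wpmul2l (ltW (_ : 0 < c^-1%:E))) => H.
rewrite (le_trans (H _))//; first by rewrite lte_fin invr_gt0.
by rewrite muleA -EFinM mulVf ?gt_eqF// mul1e.
Qed.

Lemma int_scale d (T : measurableType d) (R : realType)
  (mu : {measure set T -> \bar R}) (f : T -> \bar R) (c : R) :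
  (0 <= c)%R -> (forall x, 0 <= f x) ->
  \int[mu]_x (f x * c%:E) = \int[mu]_x f x * c%:E.
Proof.
move=> c0 f0.
under eq_integral do rewrite muleC.
rewrite muleC.
have [->|cpos] := eqVneq c 0%R.
  by rewrite mul0e integral0_eq// => x _; rewrite mul0e.
have {cpos}cpos : (0 < c)%R by rewrite lt_def cpos c0.
apply/le_anti/andP; split; first exact: int_scale_le.
have cf0 x : 0 <= c%:E * f x by rewrite mule_ge0// lee_fin ltW.
have ci : (0 < c^-1)%R by rewrite invr_gt0.
have := @int_scale_le _ _ _ mu (fun x => c%:E * f x) c^-1 ci cf0.
have -> : (fun x => c^-1%:E * (c%:E * f x)) = f.
  by apply/funext => x; rewrite muleA -EFinM mulVf ?gt_eqF// mul1e.
move=> /(lee_wpmul2l (ltW (_ : 0 < c%:E))) H.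
by rewrite (le_trans (H _))// ?lte_fin// muleA -EFinM divff ?gt_eqF// mul1e.
Qed.

Lemma tuple_int_ge0 d (X : measurableType d) (R : realType)
  (pi : probability X R) n (f : n.-tuple X -> \bar R) :
  (forall t, 0 <= f t) -> 0 <= tuple_int pi f.
Proof.
elim: n f => [|n IH] f f0 /=; first exact: f0.
by apply: integral_ge0 => x _; apply: IH.
Qed.

Lemma tuple_int_scale d (X : measurableType d) (R : realType)
  (pi : probability X R) n (f : n.-tuple X -> \bar R) (c : R) :
  (0 <= c)%R -> (forall t, 0 <= f t) ->
  tuple_int pi (fun t => f t * c%:E) = tuple_int pi f * c%:E.
Proof.
move=> c0; elim: n f => [|n IH] f f0 //=.
under eq_integral do rewrite IH//.
by rewrite int_scale// => x; apply: tuple_int_ge0.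
Qed.

Lemma tuple_int_cst d (X : measurableType d) (R : realType)
  (pi : probability X R) n (c : \bar R) :
  tuple_int pi (fun _ : n.-tuple X => c) = c.
Proof.
elim: n => [|n IH] //=.
rewrite IH.
rewrite (integral_cst pi measurableT c) /=.
have -> : pi [set: X] = 1 by apply: probability_setT.
by rewrite mule1.
Qed.


Lemma mean_hold_ge d (X : measurableType d) (R : realType)
  (tau : R.-pker X ~> R) (eps : R) (x : X) :
  (0 < eps)%R -> tau x `]eps, +oo[%classic = 1 ->
  eps%:E <= mean_hold tau x.
Proof.
move=> eps0 h1; rewrite /mean_hold.
have T1 : tau x [set: R] = 1 by apply: prob_kernel.
have mI : measurable (`]eps, +oo[%classic : set R) by [].
have mN : measurable ([set: R] `\` `]eps, +oo[%classic) by apply: measurableD.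
have N0 : tau x ([set: R] `\` `]eps, +oo[%classic) = 0.
  rewrite measureD//; last first.
    apply: (@le_lt_trans _ _ 1); last exact: ltey.
    by rewrite le_eqVlt; apply/orP; left; apply/eqP; exact: T1.
  transitivity (1 - 1 : \bar R); last by rewrite subee.
  by congr (_ - _); [exact: T1 | rewrite setTI; exact: h1].
have mm := (proj2 (measurable_realfun.measurable_EFinP [set: R] (fun h : R => Num.max h eps))
    (@measurable_realfun.measurable_maxr _ _ _ _ id (cst eps) (@measurable_id _ _ _) (measurable_cst _))).
rewrite (ae_eq_integral (fun h : R => (Num.max h eps)%:E))//.
- apply: (@le_trans _ _ (\int[tau x]_h (cst eps%:E) h)).
    by rewrite integral_cst// T1 mule1.
  apply: ge0_le_integral => //.
  + by move=> h _; rewrite lee_fin ltW.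
  + by move=> h _; rewrite lee_fin le_max lexx orbT.
- exists ([set: R] `\` `]eps, +oo[%classic); split => // h /= H.
  split => // hI; apply: H => _.
  move: hI; rewrite /= in_itv /= andbT => heps.
  by rewrite max_l// ltW.
Qed.

Lemma inner_int (R : realType) (eps r : R) (G : R -> \bar R) :
  (0 < eps)%R -> (0 < r)%R ->
  (forall l, (0 <= l)%R -> G l = (\1_(`[0%R, eps[%classic : set R) l)%:E) ->
  \int[lebesgue_measure]_(l in `[0%R, +oo[%classic) (G l * (r%:E)^-1)
  = (eps / r)%:E.
Proof.
move=> eps0 r0 HG.
rewrite inver gt_eqF//.
transitivity (\int[lebesgue_measure]_(l in `[0%R, +oo[%classic)
   (r^-1 * \1_(`[0%R, eps[%classic : set R) l)%:E).
  apply: eq_integral => l; rewrite inE /= in_itv /= andbT => l0.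
  by rewrite HG// -EFinM mulrC.
have H := @integralZl_indic _ _ _ lebesgue_measure `[0%R, +oo[%classic
  (measurable_itv _) (fun _ => `[0%R, eps[%classic) r^-1.
rewrite /= in H; rewrite H//; last by rewrite ltNge invr_ge0 (ltW r0).
rewrite integral_indic// setIidl; last first.
  by move=> l /=; rewrite !in_itv /= => /andP[->].
have L := @lebesgue_measure_itv R `[0%R, eps[.
rewrite /= lte_fin eps0 oppr0 adde0 in L.
transitivity ((r^-1)%:E * eps%:E); first by congr (_ * _); rewrite -L.
by rewrite -EFinM mulrC.
Qed.

Lemma surv1 d (X : measurableType d) (R : realType)
  (tau : R.-pker X ~> R) (eps l : R) (x : X) :
  tau x `]eps, +oo[%classic = 1 -> (l < eps)%R -> survival tau l x = 1.
Proof.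
move=> h1 leps; rewrite /survival.
have T1 : tau x [set: R] = 1 by apply: prob_kernel.
apply/le_anti/andP; split.
  rewrite -[leRHS]T1; apply: le_measure; rewrite ?inE//.
rewrite -[leLHS]h1; apply: le_measure; rewrite ?inE//.
by move=> y /=; rewrite !in_itv /= !andbT; apply: lt_trans.
Qed.

Theorem corollary7 (d : measure_display) (X : measurableType d) (R : realType)
  (K : nat) (pi : probability X R) (tau : R.-pker X ~> R) (eps : R) :
  (1 <= K)%N ->
  (0 < eps)%R ->
  (forall x : X, tau x `]eps, +oo[%classic = 1) ->
  (exists M : R, forall x : X, mean_hold tau x <= M%:E) ->
  let E := [set tl : K.+1.-tuple X * R | (tl.2 < eps)%R] in
  0 < measA pi tau E < +oo /\
  forall B : set (K.+1.-tuple X), measurable B ->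
    measA pi tau (B `*` setT `&` E) * (measA pi tau E)^-1 = prod_prob pi B.
Proof.
move=> _ eps0 h1 [M hM] E.
have I1 (c : \bar R) : \int[pi]_x (cst c) x = c.
  exact: (@tuple_int_cst _ _ _ pi 1 c).
have mlo : eps%:E <= mean_hold_pi pi tau.
  rewrite /mean_hold_pi.
  have := @int_le_nm _ _ _ pi (fun _ => eps%:E) (mean_hold tau)
    (fun _ => ltW (_ : 0 < eps%:E)) (fun x => @mean_hold_ge _ _ _ tau eps x eps0 (h1 x)).
  by rewrite I1; apply; rewrite lte_fin.
have mhi : mean_hold_pi pi tau <= M%:E.
  rewrite /mean_hold_pi.
  have := @int_le_nm _ _ _ pi (mean_hold tau) (fun _ => M%:E)
    (fun x => le_trans (ltW (_ : 0 < eps%:E)) (@mean_hold_ge _ _ _ tau eps x eps0 (h1 x))) hM.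
  by rewrite I1; apply; rewrite lte_fin.
have [r Hr] : exists r, mean_hold_pi pi tau = r%:E.
  move: mlo mhi; case: (mean_hold_pi pi tau) => [r _ _| |]; first by exists r.
    by move=> _; rewrite leNgt ltey.
  by rewrite leNgt ltNye.
have r0 : (0 < r)%R by rewrite -lte_fin -Hr (lt_le_trans _ mlo)// lte_fin.
have innerE (t : K.+1.-tuple X) :
  \int[lebesgue_measure]_(l in `[0%R, +oo[%classic)
     ((\1_E (t, l))%:E * survival tau l (tnth t ord_max) * (mean_hold_pi pi tau)^-1)
  = (eps / r)%:E.
  rewrite Hr; apply: inner_int => // l l0.
  have -> : \1_E (t, l) = \1_(`[0%R, eps[%classic : set R) l :> R.
    rewrite !indicE; congr ((nat_of_bool _)%:R); apply/idP/idP => H.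
      by apply/mem_set; rewrite /= in_itv /= l0; exact: set_mem H.
    by apply/mem_set; move: (set_mem H); rewrite /= in_itv /= l0.
  have [leps|leps] := ltP l eps.
    by rewrite (@surv1 _ _ _ tau eps)// mule1.
  rewrite indicE memNset ?mul0e// /= in_itv /= l0 /=.
  by rewrite ltNge leps.
have mE : measA pi tau E = (eps / r)%:E.
  rewrite /measA.
  have -> : (fun t : K.+1.-tuple X =>
     \int[lebesgue_measure]_(l in `[0%R, +oo[%classic)
       ((\1_E (t, l))%:E * survival tau l (tnth t ord_max) * (mean_hold_pi pi tau)^-1))
     = fun _ => (eps / r)%:E by apply/funext => t; exact: innerE.
  exact: tuple_int_cst.
split.
  by rewrite mE lte_fin divr_gt0//= ltey.
move=> B _.
rewrite mE /measA.
have -> : (fun t : K.+1.-tuple X =>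
     \int[lebesgue_measure]_(l in `[0%R, +oo[%classic)
       ((\1_(B `*` setT `&` E) (t, l))%:E * survival tau l (tnth t ord_max)
         * (mean_hold_pi pi tau)^-1))
     = fun t => (\1_B t)%:E * (eps / r)%:E.
  apply/funext => t.
  have [tB|tB] := boolP (t \in B).
    rewrite indicE tB mul1e -(innerE t); apply: eq_integral => l _.
    congr (_ * _ * _); rewrite !indicE; congr ((nat_of_bool _)%:R%:E).
    apply/idP/idP => H.
      by apply/mem_set; case: (set_mem H).
    apply/mem_set; split; [split; [exact: set_mem tB | by []] | exact: set_mem H].
  rewrite indicE (negbTE tB) mul0e integral0_eq// => l _.
  rewrite indicE memNset ?mul0e//.
  by case=> -[/mem_set]; rewrite (negbTE tB).
have c0 : (0 <= eps / r)%R by rewrite divr_ge0 // ltW.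
have f0 : forall t : K.+1.-tuple X, 0 <= ((\1_B t : R))%:E.
  by move=> t; rewrite lee_fin.
rewrite tuple_int_scale//.
rewrite -muleA inver gt_eqF ?divr_gt0// -EFinM divff ?gt_eqF ?divr_gt0// mule1.
by [].
Qed.
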